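(* Let $h\colon(0,\infty)\to(0,\infty)$ be non-decreasing and continuous, and let $\Theta$ be any one of $\Theta^0_h,\Theta^\infty_h,\Theta_h$. Then either $\lim_{r\to0^+}\Theta(r)=0$, or $\Theta(r)=1$ for every $r\in(0,1]$.
   Context: For $h\colon(0,\infty)\to(0,\infty)$ and $r>0$: $\Theta^0_h(r)=\limsup_{t\to0^+}h(rt)/h(t)$, $\Theta^\infty_h(r)=\limsup_{t\to\infty}h(rt)/h(t)$, $\Theta_h(r)=\sup_{t>0}h(rt)/h(t)$. *)

(* Defs.v *)
From mathcomp Require Import all_boot all_order all_algebra.
From mathcomp Require Import all_classical all_reals all_analysis.
Set Implicit Arguments. Unset Strict Implicit. Unset Printing Implicit Defensive.
Import Order.TTheory GRing.Theory Num.Theory numFieldNormedType.Exports.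
Local Open Scope classical_set_scope.
Local Open Scope ring_scope.

Definition hratio (R : realType) (h : R -> R) (r t : R) : \bar R :=
  (h (r * t) / h t)%:E.

(* Theta^0_h(r) = limsup_{t->0+} h(rt)/h(t) = inf_{d>0} sup_{0<t<d} h(rt)/h(t) *)
Definition Theta0 (R : realType) (h : R -> R) (r : R) : \bar R :=
  ereal_inf [set ereal_sup [set hratio h r t | t in `]0, d[] | d in `]0, +oo[%classic].

(* Theta^oo_h(r) = limsup_{t->oo} h(rt)/h(t) = inf_{M>0} sup_{t>M} h(rt)/h(t) *)
Definition ThetaInf (R : realType) (h : R -> R) (r : R) : \bar R :=
  ereal_inf [set ereal_sup [set hratio h r t | t in `]M, +oo[] | M in `]0, +oo[%classic].

Definition Theta (R : realType) (h : R -> R) (r : R) : \bar R :=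
  ereal_sup [set hratio h r t | t in `]0, +oo[%classic].

(* Main.v *)
Require Import Defs.
From mathcomp Require Import all_boot all_order all_algebra.
From mathcomp Require Import all_classical all_reals all_analysis.
Import Order.TTheory GRing.Theory Num.Theory numFieldNormedType.Exports.
Local Open Scope classical_set_scope.
Local Open Scope ring_scope.

Definition Gen {R : realType} (h : R -> R) (D : set R) (W : R -> set R) (r : R) : \bar R :=
  ereal_inf [set ereal_sup [set hratio h r t | t in W d] | d in D].

Lemma fin01 {R : realType} (x : \bar R) : (0 <= x)%E -> (x <= 1)%E -> x = (fine x)%:E.
Proof.
move=> x0 x1; rewrite fineK // ge0_fin_numE //; exact: (le_lt_trans x1 (ltry _)).
Qed.

Lemma helperH {R : realType} (x : \bar R) (k : R) (S : set (\bar R)) :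
  0 <= k -> (exists y, S y) -> (forall y, S y -> (x <= k%:E * y)%E) ->
  (x <= k%:E * ereal_inf S)%E.
Proof.
move=> k0 [y0 Sy0] H; have [kp|] := ltP 0 k.
  rewrite -ereal_inf_pZl //; apply: le_ereal_inf_tmp => _ [y Sy <-]; exact: H.
move=> k0'; have k00 : k = 0 by apply/eqP; rewrite eq_le k0' k0.
subst k; by rewrite mul0e; have := H _ Sy0; rewrite mul0e.
Qed.

Lemma prod_inf {R : realType} (x : \bar R) (A B : set (\bar R)) :
  (exists a, A a) -> (exists b, B b) ->
  (forall a, A a -> (0 <= a)%E /\ (a <= 1)%E) ->
  (forall b, B b -> (0 <= b)%E /\ (b <= 1)%E) ->
  (forall a b, A a -> B b -> (x <= a * b)%E) ->
  (x <= ereal_inf A * ereal_inf B)%E.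
Proof.
move=> [a0 Aa0] Bne HA HB H.
have iA0 : (0 <= ereal_inf A)%E by apply: le_ereal_inf_tmp => a /HA [].
have iA1 : (ereal_inf A <= 1)%E.
  by apply: le_trans (ereal_inf_lbound Aa0) _; case: (HA _ Aa0).
rewrite (@fin01 _ _ iA0 iA1); apply: helperH => //; first by rewrite -lee_fin -fin01.
move=> b Bb; have [b0 b1] := HB _ Bb; rewrite -fin01 // muleC (@fin01 _ _ b0 b1).
apply: helperH => //; first by rewrite -lee_fin -fin01.
  by exists a0.
by move=> a Aa; rewrite -fin01 // muleC; apply: H.
Qed.
Definition WinOK {R : realType} (D : set R) (W : R -> set R) :=
  [/\ exists d, D d, forall d t, D d -> W d t -> 0 < t,
      forall d, D d -> exists t, W d t &
      forall s, 0 < s -> s <= 1 -> forall d1 d2, D d1 -> D d2 ->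
        exists2 d, D d & forall t, W d t -> W d1 (s * t) /\ W d2 t].

Definition Sup {R : realType} (h : R -> R) (W : R -> set R) r d : \bar R :=
  ereal_sup [set hratio h r t | t in W d].

Lemma ratio_ge0 {R : realType} {h : R -> R} (hpos : forall x : R, 0 < x -> 0 < h x) {r t} :
  0 < r -> 0 < t -> (0 <= hratio h r t)%E.
Proof.
move=> r0 t0; rewrite lee_fin; apply: divr_ge0; apply: ltW; apply: hpos => //.
exact: mulr_gt0.
Qed.

Lemma ratio_le {R : realType} {h : R -> R} (hpos : forall x : R, 0 < x -> 0 < h x)
  (hmono : forall x y : R, 0 < x -> x <= y -> h x <= h y) {r s t} :
  0 < r -> r <= s -> 0 < t -> (hratio h r t <= hratio h s t)%E.
Proof.
move=> r0 rs t0; rewrite lee_fin ler_pM2r ?invr_gt0 ?hpos //.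
apply: hmono; first exact: mulr_gt0.
by rewrite ler_pM2r.
Qed.

Lemma Sup_ge0 {R : realType} {h : R -> R} (hpos : forall x : R, 0 < x -> 0 < h x)
  {D W} (HW : WinOK D W) {r d} : 0 < r -> D d -> (0 <= Sup h W r d)%E.
Proof.
case: HW => _ Wp Wn _ r0 Dd; have [t Wt] := Wn d Dd.
apply: le_ereal_sup_tmp; exists (hratio h r t); first by exists t.
exact: ratio_ge0 (Wp _ _ Dd Wt).
Qed.

Lemma Sup_le1 {R : realType} {h : R -> R} (hpos : forall x : R, 0 < x -> 0 < h x)
  (hmono : forall x y : R, 0 < x -> x <= y -> h x <= h y)
  {D W} (HW : WinOK D W) {r d} : 0 < r -> r <= 1 -> D d -> (Sup h W r d <= 1)%E.
Proof.
case: HW => _ Wp Wn _ r0 r1 Dd; apply: ge_ereal_sup => _ [t Wt <-].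
have t0 := Wp _ _ Dd Wt.
have := ratio_le hpos hmono r0 r1 t0.
by rewrite /hratio mul1r divff // gt_eqF // hpos.
Qed.

Lemma Gen_ge0 {R : realType} {h : R -> R} (hpos : forall x : R, 0 < x -> 0 < h x)
  {D W} (HW : WinOK D W) {r} : 0 < r -> (0 <= Gen h D W r)%E.
Proof.
move=> r0; apply: le_ereal_inf_tmp => _ [d Dd <-]; exact: (Sup_ge0 hpos HW).
Qed.

Lemma Gen_le1 {R : realType} {h : R -> R} (hpos : forall x : R, 0 < x -> 0 < h x)
  (hmono : forall x y : R, 0 < x -> x <= y -> h x <= h y)
  {D W} (HW : WinOK D W) {r} : 0 < r -> r <= 1 -> (Gen h D W r <= 1)%E.
Proof.
move=> r0 r1; have [[d Dd] _ _ _] := HW.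
apply: ge_ereal_inf; exists (Sup h W r d); first by exists d.
exact: (Sup_le1 hpos hmono HW).
Qed.

Lemma Gen_mono {R : realType} {h : R -> R} (hpos : forall x : R, 0 < x -> 0 < h x)
  (hmono : forall x y : R, 0 < x -> x <= y -> h x <= h y)
  {D W} (HW : WinOK D W) {r s} : 0 < r -> r <= s -> (Gen h D W r <= Gen h D W s)%E.
Proof.
move=> r0 rs; have [_ Wp _ _] := HW.
apply: le_ereal_inf_tmp => _ [d Dd <-]; apply: ge_ereal_inf.
exists (Sup h W r d); first by exists d.
apply: ge_ereal_sup => _ [t Wt <-]; apply: le_ereal_sup_tmp.
exists (hratio h s t); first by exists t.
exact: ratio_le (Wp _ _ Dd Wt).
Qed.

Lemma Gen_submul {R : realType} {h : R -> R} (hpos : forall x : R, 0 < x -> 0 < h x)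
  (hmono : forall x y : R, 0 < x -> x <= y -> h x <= h y)
  {D W} (HW : WinOK D W) {r s} : 0 < r -> r <= 1 -> 0 < s -> s <= 1 ->
  (Gen h D W (r * s) <= Gen h D W r * Gen h D W s)%E.
Proof.
move=> r0 r1 s0 s1; have [[d0 Dd0] Wp _ Wpr] := HW.
apply: prod_inf.
- by exists (Sup h W r d0); exists d0.
- by exists (Sup h W s d0); exists d0.
- by move=> _ [d Dd <-]; split; [exact: (Sup_ge0 hpos HW) | exact: (Sup_le1 hpos hmono HW)].
- by move=> _ [d Dd <-]; split; [exact: (Sup_ge0 hpos HW) | exact: (Sup_le1 hpos hmono HW)].
move=> _ _ [d1 D1 <-] [d2 D2 <-].
have [d Dd Hd] := Wpr s s0 s1 d1 d2 D1 D2.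
apply: ge_ereal_inf; exists (Sup h W (r * s) d); first by exists d.
apply: ge_ereal_sup => _ [t Wt <-].
have [W1 W2] := Hd t Wt.
have t0 := Wp _ _ Dd Wt.
have st0 : 0 < s * t by exact: mulr_gt0.
have -> : hratio h (r * s) t = (hratio h r (s * t) * hratio h s t)%E.
  rewrite /hratio -EFinM mulrA -mulrA (mulrA r s t); congr EFin.
  by rewrite -(mulrA (h (r * s * t))) ; rewrite (mulrA (h (s*t))^-1) mulVf ?mul1r // gt_eqF // hpos.
apply: lee_pmul.
- exact: ratio_ge0.
- exact: ratio_ge0.
- by apply: ereal_sup_ubound; exists (s * t).
- by apply: ereal_sup_ubound; exists t.
Qed.

Lemma W0_ok {R : realType} :
  WinOK (`]0, +oo[%classic : set R) (fun d => `]0, d[%classic).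
Proof.
split.
- by exists 1; rewrite /= in_itv /= andbT.
- by move=> d t _; rewrite /= in_itv /= => /andP[].
- move=> d; rewrite /= in_itv /= andbT => d0; exists (d / 2).
  by rewrite /= in_itv /= divr_gt0 //= ltr_pdivrMr // ltr_pMr // ltr1n.
move=> s s0 s1 d1 d2; rewrite /= !in_itv /= !andbT => d10 d20.
exists (Order.min d1 d2); first by rewrite /= in_itv /= andbT lt_min d10 d20.
move=> t; rewrite /= !in_itv /= lt_min => /andP[t0 /andP[td1 td2]].
rewrite t0 td2 mulr_gt0 //=; split => //.
by apply: le_lt_trans td1; rewrite ler_piMl // ltW.
Qed.

Lemma Winf_ok {R : realType} :
  WinOK (`]0, +oo[%classic : set R) (fun M => `]M, +oo[%classic).
Proof.
split.
- by exists 1; rewrite /= in_itv /= andbT.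
- by move=> d t; rewrite /= !in_itv /= !andbT => d0 dt; exact: lt_trans dt.
- move=> d; rewrite /= in_itv /= andbT => d0; exists (d + 1).
  by rewrite /= in_itv /= andbT ltrDl ltr01.
move=> s s0 s1 d1 d2; rewrite /= !in_itv /= !andbT => d10 d20.
exists (Order.max (d1 / s) d2).
  by rewrite /= in_itv /= andbT lt_max d20 orbT.
move=> t; rewrite /= !in_itv /= !andbT gt_max => /andP[t1 t2]; split => //.
by move: t1; rewrite ltr_pdivrMr // mulrC.
Qed.

Lemma Wall_ok {R : realType} :
  WinOK ([set 0] : set R) (fun _ => `]0, +oo[%classic).
Proof.
split.
- by exists 0.
- by move=> d t _; rewrite /= in_itv /= andbT.
- by move=> d _; exists 1; rewrite /= in_itv /= andbT.
move=> s s0 s1 d1 d2 D1 D2; exists 0 => // t; rewrite /= !in_itv /= !andbT => t0.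
by rewrite mulr_gt0.
Qed.

Lemma Gen_dich {R : realType} {h : R -> R} (hpos : forall x : R, 0 < x -> 0 < h x)
  (hmono : forall x y : R, 0 < x -> x <= y -> h x <= h y)
  {D W} (HW : WinOK D W) :
  (Gen h D W r @[r --> 0^'+] --> 0%E) \/
  (forall r : R, 0 < r -> r <= 1 -> Gen h D W r = 1%E).
Proof.
set G := Gen h D W.
case: (pselect (exists r0, [/\ 0 < r0, r0 <= 1 & G r0 != 1%E])); last first.
  move=> K; right => r r0 r1; case: (eqVneq (G r) 1%E) => // ne.
  by exfalso; apply: K; exists r; split.
move=> [r0 [r00 r01 Hne]]; left.
have G0 : (0 <= G r0)%E := Gen_ge0 hpos HW r00.
have G1 : (G r0 <= 1)%E := Gen_le1 hpos hmono HW r00 r01.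
set c := fine (G r0).
have Gc : G r0 = c%:E := @fin01 _ _ G0 G1.
have c0 : 0 <= c by rewrite -lee_fin -Gc.
have c1 : c < 1 by rewrite -lte_fin -Gc lt_neqAle Hne G1.
have rn0 n : 0 < r0 ^+ n by rewrite exprn_gt0.
have rn1 n : r0 ^+ n <= 1 by rewrite exprn_ile1 // ltW.
have pow (n : nat) : (G (r0 ^+ n.+1)%R <= (c ^+ n.+1)%R%:E)%E.
  elim: n => [|n IH]; first by rewrite !expr1 Gc.
  rewrite exprS [in X in (_ <= X)%E]exprS EFinM.
  apply: le_trans (Gen_submul hpos hmono HW r00 r01 (rn0 _) (rn1 _)) _.
  apply: lee_pmul => //; first exact: (Gen_ge0 hpos HW (rn0 _)).
  by rewrite -Gc; apply: le_refl.
apply: cvg_EFin.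
  near=> r; rewrite ge0_fin_numE; last exact: (Gen_ge0 hpos HW).
  apply: le_lt_trans (ltry 1); apply: (Gen_le1 hpos hmono HW) => //.
  by apply: ltW.
apply/cvgrPdist_lt => e e0.
have : `|c| < 1 by rewrite ger0_norm.
move/cvg_expr/cvgrPdist_lt/(_ e e0) => [N _ HN].
have cN : c ^+ N.+1 < e.
  by have := HN N.+1 (leqnSn N); rewrite sub0r normrN ger0_norm // exprn_ge0.
near=> r.
have Gr0 : (0 <= G r)%E by apply: (Gen_ge0 hpos HW).
have Gr1 : (G r <= 1)%E by apply: (Gen_le1 hpos hmono HW) => //; apply: ltW.
rewrite /= sub0r normrN ger0_norm; last exact: fine_ge0.
rewrite -lte_fin -(@fin01 _ _ Gr0 Gr1).
apply: le_lt_trans (@Gen_mono _ _ hpos hmono _ _ HW r (r0 ^+ N.+1) _ _) _.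
- by near: r; exact: nbhs_right_gt.
- by apply: ltW; near: r; exact: nbhs_right_lt (rn0 N.+1).
by apply: le_lt_trans (pow N) _; rewrite lte_fin.
Unshelve. all: end_near.
Qed.

Theorem corollary4p6 (R : realType) (h : R -> R)
  (hpos : forall x : R, 0 < x -> 0 < h x)
  (hmono : forall x y : R, 0 < x -> x <= y -> h x <= h y)
  (hcont : {in `]0, +oo[%classic, continuous h})
  (Th : R -> \bar R)
  (hTh : Th = Theta0 h \/ Th = ThetaInf h \/ Th = Theta h) :
  (Th r @[r --> 0^'+] --> 0%E) \/
  (forall r : R, 0 < r -> r <= 1 -> Th r = 1%E).
Proof.
case: hTh => [->|[->|->]].
- exact: (Gen_dich hpos hmono W0_ok).
- exact: (Gen_dich hpos hmono Winf_ok).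
have -> : Theta h = Gen h [set 0] (fun _ => `]0, +oo[%classic).
  by apply/funext => r; rewrite /Gen image_set1 ereal_inf1.
exact: (Gen_dich hpos hmono Wall_ok).
Qed.
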